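(* Let $r_0,\overline{r_0},l_0\in\mathbb N$, let $G_0\in\mathcal C_{V_0,2l_0}$ and $\overline{G_0}\in\mathcal C_{\overline V_0,2l_0}$ be circuit multigraphs without balanced leaves on finite vertex sets $V_0,\overline V_0\subset\mathbb N$ with $\#V_0=r_0$, $\#\overline V_0=\overline{r_0}$, and let $V'\subset\mathbb N$ be a finite set with $l':=\#V'$, disjoint from $V_0$ and $\overline V_0$. Assume that if $l_0=1$ and $G_0$ has a route $(v_i,v_j)$ with $v_i\ne v_j$, then $v_i,v_j$ are larger than all elements of $V'$, and likewise for $\overline{G_0}$. Then for every $B\subset V'$, $$\#\{G\in\mathcal C_{V_0\sqcup V',2l_0+2l'}\mid \operatorname S(G)=G_0,\ B(G)\cap V'=B\}=\#\{G\in\mathcal C_{\overline V_0\sqcup V',2l_0+2l'}\mid \operatorname S(G)=\overline{G_0},\ B(G)\cap V'=B\}.$$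
   Context: Vertices are positive integers with their natural order. For a finite $V\subset\mathbb N$ and $N\ge1$, a route through $V$ of length $N$ is a sequence $\mathbf i=(i_1,\dots,i_N)\in V^N$ whose set of entries equals $V$; its circuit multigraph $G_{\mathbf i}$ has vertex set $V$ and edges $1,\dots,N$ (own identity), edge $k<N$ from $i_k$ to $i_{k+1}$, edge $N$ from $i_N$ to $i_1$; $\mathcal C_{V,N}$ is the set of these, identified with their routes. Black vertices: $B(G_{\mathbf i})=\{i_t:t\text{ odd}\}$. Balanced leaf (only when $N>2$): a vertex $v$ occurring exactly once in $\mathbf i$, say $i_t=v$, with equal cyclic neighbours $i_{t-1}=i_{t+1}$ (indices mod $N$). Removing $v=i_t$: delete positions $t,t+1$ if $t<N$, positions $N-1,N$ if $t=N$. Seed graph: $\operatorname S(G)=G$ if $G$ has no balanced leaf, otherwise $\operatorname S(G)=\operatorname S(\widetilde G)$ with $\widetilde G$ being $G$ with its smallest balanced leaf removed. *)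

(* Defs.v *)
From mathcomp Require Import all_boot.
From mathcomp Require Import finmap.
Set Implicit Arguments. Unset Strict Implicit. Unset Printing Implicit Defensive.
Local Open Scope fset_scope.

(* Routes are sequences of vertices (positions are 0-indexed here: the
   paper's position t corresponds to index t-1). *)

Fixpoint all_seqs (V : seq nat) (N : nat) : seq (seq nat) :=
  match N with
  | 0 => [:: [::]]
  | N'.+1 => [seq x :: s | x <- V, s <- all_seqs V N']
  end.

Definition is_route (V : {fset nat}) (N : nat) (s : seq nat) : bool :=
  [&& size s == N, all (fun x => x \in V) s & all (fun v => v \in s) V].

(* C_{V,N}, as the list of routes (each circuit multigraph identified with its route) *)
Definition circuits (V : {fset nat}) (N : nat) : seq (seq nat) :=
  [seq s <- all_seqs V N | is_route V N s].

(* black vertices: entries at odd (1-indexed) positions = even 0-indexed positions *)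
Definition black (s : seq nat) : {fset nat} :=
  [fset nth 0 s t | t in iota 0 (size s) & ~~ odd t].

Definition is_bleaf (s : seq nat) (v : nat) : bool :=
  let N := size s in
  let t := index v s in
  [&& 2 < N, count_mem v s == 1 &
      nth 0 s ((t + N - 1) %% N) == nth 0 s ((t + 1) %% N)].

Definition has_bleaf (s : seq nat) : bool := has (is_bleaf s) s.

Definition remove_at (t : nat) (s : seq nat) : seq nat :=
  if t.+1 < size s then take t s ++ drop t.+2 s
  else take (size s - 2) s.

Definition min_bleaf (s : seq nat) : option nat :=
  match [seq v <- s | is_bleaf s v] with
  | [::] => None
  | v :: l => Some (foldr minn v l)
  end.

Fixpoint seed_rec (k : nat) (s : seq nat) : seq nat :=
  match k with
  | 0 => s
  | k'.+1 => match min_bleaf s with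
             | None => s
             | Some v => seed_rec k' (remove_at (index v s) s)
             end
  end.

(* S(G); fuel size s suffices since each removal shortens the route by 2 *)
Definition seed (s : seq nat) : seq nat := seed_rec (size s) s.

Definition count_seeded (V : {fset nat}) (N : nat) (G0 : seq nat)
    (V' B : {fset nat}) : nat :=
  size [seq G <- circuits V N | (seed G == G0) && (black G `&` V' == B)].

(* Main.v *)
Require Import Defs.
From mathcomp Require Import all_boot.
From mathcomp Require Import finmap.
Set Implicit Arguments. Unset Strict Implicit. Unset Printing Implicit Defensive.

Section Gen.
Variables T U : Type.
Implicit Types s : seq T.

Lemma zip_nilr s : zip s ([::] : seq U) = [::].
Proof. by case: s. Qed.

Lemma drop_zip k s (u : seq U) : drop k (zip s u) = zip (drop k s) (drop k u).
Proof.
elim: k s u => [|k IH] s u; first by rewrite !drop0.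
case: s => [|x s]; case: u => [|y u] //=; [by case: (drop k u) | by case: (drop k s)].
Qed.

Lemma take_zip k s (u : seq U) : take k (zip s u) = zip (take k s) (take k u).
Proof.
elim: k s u => [|k IH] s u; first by rewrite !take0.
case: s => [|x s]; case: u => [|y u] //=; by rewrite IH.
Qed.

Lemma rot_zip k s (u : seq U) : size s = size u ->
  rot k (zip s u) = zip (rot k s) (rot k u).
Proof.
move=> hs; rewrite /rot drop_zip take_zip zip_cat //.
by rewrite !size_drop hs.
Qed.
End Gen.

Section Trip.
Definition triples (s : seq nat) := zip (rotr 1 s) (zip s (rot 1 s)).

Lemma triples_rot k s : triples (rot k s) = rot k (triples s).
Proof.
rewrite /triples -rot_rotr rot_rot rot_zip ?rot_zip ?size_zip ?size_rot ?size_rotr ?minnn //.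
Qed.

Lemma mem_triples_rot k s : triples (rot k s) =i triples s.
Proof. by move=> x; rewrite triples_rot mem_rot. Qed.
End Trip.
From mathcomp Require Import zify.

Lemma size_triples s : size (triples s) = size s.
Proof. by rewrite /triples !size_zip size_rot size_rotr !minnn. Qed.

Lemma nth_rot1 (s : seq nat) p : p < size s ->
  nth 0 (rot 1 s) p = nth 0 s ((p + 1) %% size s).
Proof.
case: s => [|x s] //= hp; rewrite rot1_cons nth_rcons.
case: (ltngtP p (size s)) => [hlt|hgt|heq].
- by rewrite modn_small ?addn1.
- by lia.
- by rewrite heq addn1 modnn.
Qed.

Lemma nth_rotr1 (s : seq nat) p : p < size s ->
  nth 0 (rotr 1 s) p = nth 0 s ((p + size s - 1) %% size s).
Proof.
case: s => [|x s] // hp; rewrite [size (x :: s)]/= in hp *.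
rewrite [in rotr _ _]lastI rotr1_rcons.
rewrite [in RHS]lastI nth_rcons size_belast.
case: p hp => [|q] hq /=.
  by rewrite add0n subn1 /= modn_small // ltnn eqxx.
have -> : (q.+1 + (size s).+1 - 1) = q + (size s).+1 by lia.
rewrite modnDr modn_small; last by lia.
by have -> : q < size s by lia.
Qed.

Lemma nth_triples s p : p < size s ->
  nth (0,(0,0)) (triples s) p =
  (nth 0 s ((p + size s - 1) %% size s), (nth 0 s p, nth 0 s ((p + 1) %% size s))).
Proof.
move=> hp; rewrite /triples nth_zip ?nth_zip ?size_zip ?size_rot ?size_rotr ?minnn //.
by rewrite nth_rot1 // nth_rotr1.
Qed.

Lemma zip3_rcons_mem (L1 L2 S : seq nat) c c' x :
  size L1 = (size S).+1 -> size L2 = (size S).+1 ->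
  x \in zip L1 (zip L2 (rcons S c)) ->
  x \in zip L1 (zip L2 (rcons S c')) \/ (x.2.1 = last 0 L2 /\ x.2.2 = c).
Proof.
case/lastP: L1 => [|B1 a1] //; case/lastP: L2 => [|B2 a2] //.
rewrite !size_rcons => [[h1]] [h2].
rewrite !zip_rcons ?size_zip ?size_rcons ?h1 ?h2 ?minnn // !mem_rcons !in_cons.
case/orP=> [/eqP -> | h]; last by left; rewrite h orbT.
by right; rewrite last_rcons.
Qed.

Lemma triples_cons (z : nat) Z' :
  triples (z :: Z') = zip (last z Z' :: belast z Z') (zip (z :: Z') (rcons Z' z)).
Proof. by rewrite /triples rot1_cons [in rotr _ _]lastI rotr1_rcons. Qed.

Lemma triples_W (v z : nat) Z' :
  triples (v :: last z Z' :: z :: Z') =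
  (last z Z', (v, last z Z')) :: (v, (last z Z', z)) ::
     zip (last z Z' :: belast z Z') (zip (z :: Z') (rcons Z' v)).
Proof.
rewrite /triples rot1_cons.
have -> : v :: last z Z' :: z :: Z' = rcons (v :: last z Z' :: belast z Z') (last z Z').
  by rewrite [RHS]/= -lastI.
rewrite rotr1_rcons /= -lastI.
done.
Qed.

Lemma count_rot (T : Type) (a : pred T) k (s : seq T) : count a (rot k s) = count a s.
Proof. by rewrite /rot count_cat addnC -count_cat cat_take_drop. Qed.

Section Pred.
Variable P : pred nat.

Definition R3 (X : seq nat) := forall x, x \in triples X ->
  P x.2.1 -> ~~ P x.1 -> ~~ P x.2.2 -> x.1 = x.2.2.

Definition leafish (X : seq nat) (w : nat) := count_mem w X = 1 /\
  forall x, x \in triples X -> x.2.1 = w -> x.1 = x.2.2.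

Lemma R3_rot k X : R3 (rot k X) <-> R3 X.
Proof. by split=> h x; [rewrite -(mem_triples_rot k) | rewrite (mem_triples_rot k)]; apply: h. Qed.

Lemma leafish_rot k X w : leafish (rot k X) w <-> leafish X w.
Proof.
rewrite /leafish count_rot.
by split=> -[h1 h2]; split=> // x; [rewrite -(mem_triples_rot k) | rewrite (mem_triples_rot k)]; apply: h2.
Qed.

Lemma R3_W v z Z' : P v -> R3 (z :: Z') -> R3 (v :: last z Z' :: z :: Z').
Proof.
move=> Pv h x; rewrite triples_W !in_cons => /or3P [/eqP -> | /eqP -> | hx] //=.
- by rewrite Pv.
- have hs1 : size (last z Z' :: belast z Z') = (size Z').+1 by rewrite /= size_belast.
  case: (zip3_rcons_mem z hs1 (erefl : size (z :: Z') = (size Z').+1) hx).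
    by move=> hx'; apply: h; rewrite triples_cons.
  by move=> [_ ->]; rewrite Pv.
Qed.

Lemma leafish_W v z Z' w : P v -> ~~ P w ->
  leafish (v :: last z Z' :: z :: Z') w -> leafish (z :: Z') w.
Proof.
move=> Pv Pw [hc ht].
have hwv : v != w by apply: contraNneq Pw => <-.
have hwu : last z Z' != w.
  apply/negP => /eqP hu; move: hc; rewrite /= (negbTE hwv) hu eqxx.
  have : w \in z :: Z' by rewrite -hu mem_last.
  move=> hin; rewrite -[(z == w) + _]/(count_mem w (z :: Z')).
  have : 0 < count_mem w (z :: Z') by rewrite -has_count has_pred1.
  lia.
split.
  by move: hc; rewrite /= (negbTE hwv) (negbTE hwu).
move=> x hx hxw; apply: ht => //; rewrite triples_W !in_cons; apply/or3P; constructor 3.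
move: hx; rewrite triples_cons => hx.
have hs1 : size (last z Z' :: belast z Z') = (size Z').+1 by rewrite /= size_belast.
case: (zip3_rcons_mem v hs1 (erefl : size (z :: Z') = (size Z').+1) hx) => // -[hl _].
by move: hwu; rewrite -hxw hl /= eqxx.
Qed.
End Pred.

Definition ins (T : Type) (x0 : T) (t : nat) (v : T) (X : seq T) : seq T :=
  let n := size X in
  if t <= n then take t X ++ v :: nth x0 X ((t + n - 1) %% n) :: drop t X
  else X ++ [:: nth x0 X 0; v].

Lemma map_ins (T U : Type) (f : T -> U) x0 t v X :
  map f (ins x0 t v X) = ins (f x0) t (f v) (map f X).
Proof.
rewrite /ins size_map; case: ifP => _; rewrite map_cat /= ?map_take ?map_drop;
  congr (_ ++ _); congr (_ :: _) => //.
- case: (ltnP ((t + size X - 1) %% size X) (size X)) => h.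
    by rewrite (nth_map x0).
  by rewrite !nth_default ?size_map.
- case: (ltnP 0 (size X)) => h.
    by rewrite (nth_map x0).
  by rewrite !nth_default ?size_map.
Qed.

Lemma size_ins t v (X : seq nat) : t <= (size X).+1 -> size (ins 0 t v X) = (size X).+2.
Proof.
rewrite /ins; case: ifP => h _; rewrite size_cat /=; last by rewrite addn2.
by rewrite size_take size_drop; case: ltnP => h2; lia.
Qed.

Lemma remove_ins t v (X : seq nat) : t <= (size X).+1 -> remove_at t (ins 0 t v X) = X.
Proof.
move=> ht; rewrite /remove_at size_ins //.
rewrite /ins; case: (leqP t (size X)) => h.
  have -> : t.+1 < (size X).+2 by lia.
  rewrite take_cat drop_cat size_takel //.
  rewrite ltnn subnn take0 cats0.
  have -> : (t.+2 < t) = false by lia.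
  have -> : t.+2 - t = 2 by lia.
  by rewrite /= drop0 cat_take_drop.
have -> : t = (size X).+1 by lia.
by rewrite ltnn subn2 /= take_cat ltnn subnn take0 cats0.
Qed.

Lemma last_rot t (X : seq nat) : 0 < size X -> t <= size X ->
  last 0 (rot t X) = nth 0 X ((t + size X - 1) %% size X).
Proof.
move=> hX ht; case: t ht => [|t] ht.
  by rewrite rot0 add0n subn1 modn_small ?prednK // -nth_last.
rewrite /rot last_cat (take_nth 0) // last_rcons.
have -> : t.+1 + size X - 1 = t + size X by lia.
by rewrite modnDr modn_small.
Qed.

Lemma ins_rot t v (X : seq nat) : 0 < size X -> t <= (size X).+1 ->
  exists k j, ins 0 t v X = rot k (v :: last 0 (rot j X) :: rot j X).
Proof.
move=> hX ht; rewrite /ins; case: (leqP t (size X)) => h.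
  exists (size (v :: last 0 (rot t X) :: rot t X) - t), t.
  rewrite -/(rotr t _) -[LHS](rotK t); congr rotr.
  rewrite -{1}(size_takel h) rot_size_cat last_rot //.
exists 1, 1; case: X hX {ht h} => [|x X] // _.
by rewrite [rot 1 (x :: X)]rot1_cons last_rcons rot1_cons /= -!cats1 -catA.
Qed.

Lemma last_rot_mem j (X : seq nat) : 0 < size X -> last 0 (rot j X) \in X.
Proof.
move=> hX; rewrite -(mem_rot j).
case: (rot j X) (size_rot j X) => [|z Z] hs; first by rewrite -hs in hX.
exact: mem_last.
Qed.

Lemma mem_ins t v (X : seq nat) y : 0 < size X -> t <= (size X).+1 ->
  (y \in ins 0 t v X) = (y == v) || (y \in X).
Proof.
move=> hX ht; case: (ins_rot v hX ht) => k [j ->].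
rewrite mem_rot !in_cons mem_rot.
case: eqP => [->|_] //=; case: eqP => [->|_] //; by rewrite last_rot_mem.
Qed.

Lemma count_ins t v (X : seq nat) w : 0 < size X -> t <= (size X).+1 ->
  count_mem w X + (v == w) <= count_mem w (ins 0 t v X).
Proof.
move=> hX ht; case: (ins_rot v hX ht) => k [j ->].
rewrite count_rot /= count_rot; lia.
Qed.

Lemma R3_ins (P : pred nat) t v (X : seq nat) : 0 < size X -> t <= (size X).+1 ->
  P v -> R3 P X -> R3 P (ins 0 t v X).
Proof.
move=> hX ht Pv h; case: (ins_rot v hX ht) => k [j ->].
apply/R3_rot; move/(R3_rot P j): h.
case: (rot j X) (size_rot j X) => [|z Z] hs; first by rewrite -hs in hX.
exact: R3_W.
Qed.

Lemma leafish_ins (P : pred nat) t v (X : seq nat) w : 0 < size X -> t <= (size X).+1 ->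
  P v -> ~~ P w -> leafish (ins 0 t v X) w -> leafish X w.
Proof.
move=> hX ht Pv Pw; case: (ins_rot v hX ht) => k [j ->].
move/leafish_rot => h; apply/(leafish_rot j); move: h.
case: (rot j X) (size_rot j X) => [|z Z] hs; first by rewrite -hs in hX.
exact: (leafish_W Pv Pw).
Qed.

Lemma count1_mem (s : seq nat) v : count_mem v s = 1 -> v \in s.
Proof. by move=> h; rewrite -has_pred1 has_count h. Qed.

Lemma ins_remove (s : seq nat) v : is_bleaf s v ->
  ins 0 (index v s) v (remove_at (index v s) s) = s.
Proof.
rewrite /is_bleaf => /and3P [hN /eqP hc /eqP hb].
have vs : v \in s by apply: count1_mem.
have ht : index v s < size s by rewrite index_mem.
have hv : nth 0 s (index v s) = v by rewrite nth_index.
move: hb hv ht; set t := index v s; set N := size s => hb hv ht.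
rewrite /remove_at -/N.
case: (ltnP t.+1 N) => h1.
  have hsz : size (take t s ++ drop t.+2 s) = N - 2.
    by rewrite size_cat size_takel ?size_drop; lia.
  rewrite /ins hsz.
  have -> : (t <= N - 2) = true by lia.
  rewrite take_cat size_takel ?ltnn ?subnn ?take0 ?cats0; last by lia.
  rewrite drop_cat size_takel ?ltnn ?subnn ?drop0; last by lia.
  have e : s = take t s ++ v :: nth 0 s t.+1 :: drop t.+2 s.
    by rewrite -hv -!drop_nth ?cat_take_drop.
  rewrite [RHS]e; congr (_ ++ _ :: _ :: _).
  rewrite -[nth 0 s t.+1](_ : nth 0 s ((t + 1) %% N) = _); last by rewrite modn_small ?addn1.
  rewrite -hb.
  case: (posnP t) => [t0|tpos].
    rewrite t0 add0n add0n !subn1 !modn_small; try lia.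
    rewrite nth_cat size_takel /=; last by lia.
    rewrite nth_drop; congr nth; lia.
  have -> : (t + (N - 2) - 1) = t.-1 + (N - 2) by lia.
  have -> : (t + N - 1) = t.-1 + N by lia.
  rewrite !modnDr !modn_small; try lia.
  rewrite nth_cat size_takel; last lia.
  have -> : (t.-1 < t) = true by lia.
  by rewrite nth_take; lia.
have et : t = N.-1 by lia.
have hsz : size (take (N - 2) s) = N - 2 by rewrite size_takel; lia.
rewrite /ins hsz.
have -> : (t <= N - 2) = false by lia.
have e : s = take (N - 2) s ++ [:: nth 0 s (N - 2); nth 0 s N.-1].
  rewrite -[LHS](cat_take_drop (N - 2)); congr (_ ++ _).
  rewrite (drop_nth 0) ?(drop_nth 0 (n := (N-2).+1)); try lia.
  rewrite drop_oversize; last lia.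
  by have -> : (N - 2).+1 = N.-1 by lia.
rewrite [RHS]e -et hv; congr (_ ++ _ :: _).
rewrite nth_take; last lia.
move: hb; rewrite et.
have -> : N.-1 + N - 1 = N - 2 + N by lia.
have -> : N.-1 + 1 = N by lia.
by rewrite modnDr modnn modn_small; lia.
Qed.

Lemma index_of_nth (X : seq nat) w p : count_mem w X = 1 -> p < size X ->
  nth 0 X p = w -> index w X = p.
Proof.
move=> hc hp hw.
have e : X = take p X ++ w :: drop p.+1 X by rewrite -hw -drop_nth ?cat_take_drop.
have hn : w \notin take p X.
  apply/negP => hin; move: hc; rewrite e count_cat /= eqxx.
  have : 0 < count_mem w (take p X) by rewrite -has_count has_pred1.
  set c1 := count _ (take p X); set c2 := count _ (drop _ X); rewrite [true + _]/=; lia.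
rewrite {1}e index_cat.
by rewrite (negbTE hn) /= eqxx addn0 size_takel // ltnW. Qed.

Lemma bleafP (X : seq nat) w : is_bleaf X w <-> 2 < size X /\ leafish X w.
Proof.
rewrite /is_bleaf /leafish; split.
  case/and3P => hN /eqP hc /eqP hb; split=> //; split=> // x.
  case/(nthP (0,(0,0))) => p; rewrite size_triples => hp <-.
  rewrite nth_triples //= => hw.
  by have := index_of_nth hc hp hw => <-.
case=> hN [hc h]; rewrite hN hc eqxx /=; apply/eqP.
have hi : index w X < size X by rewrite index_mem; apply: count1_mem.
have hm : nth (0,(0,0)) (triples X) (index w X) \in triples X.
  by rewrite mem_nth // size_triples.
have := h _ hm; rewrite nth_triples //= nth_index; last by apply: count1_mem.
by apply.
Qed.

Section PR.
Variable P : pred nat.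
Definition pr (x : nat) : option nat := if P x then Some x else None.

Lemma prP x y : pr x = pr y -> (P x = P y) /\ (P x -> x = y).
Proof. by rewrite /pr; case: (P x); case: (P y) => // [[->]]. Qed.

Lemma pr_eqE w x : P w -> (pr x == Some w) = (x == w).
Proof.
move=> Pw; rewrite /pr; case: ifP => Px; first by [].
by case: (x =P w) => [ex|//]; rewrite ex Pw in Px.
Qed.

Lemma count_pr (G H : seq nat) w : P w -> map pr G = map pr H ->
  count_mem w G = count_mem w H.
Proof.
move=> Pw e.
have cE (X : seq nat) : count_mem w X = count (pred1 (Some w)) (map pr X).
  by rewrite count_map; apply: eq_count => x /=; rewrite pr_eqE.
by rewrite !cE e.
Qed.

Lemma index_pr (G H : seq nat) w : P w -> map pr G = map pr H ->
  index w G = index w H.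
Proof.
move=> Pw e.
have iE (X : seq nat) : index w X = find (pred1 (Some w)) (map pr X).
  by rewrite find_map /index; apply: eq_find => x /=; rewrite pr_eqE.
by rewrite !iE e.
Qed.

Lemma nth_pr (G H : seq nat) q : map pr G = map pr H -> q < size G ->
  pr (nth 0 G q) = pr (nth 0 H q).
Proof.
move=> e hq; have hs : size G = size H by rewrite -(size_map pr G) e size_map.
by rewrite -!(nth_map 0 None) -?hs // e.
Qed.

Lemma eq_pr a c a' c' : pr a = pr a' -> pr c = pr c' ->
  (~~ P a -> ~~ P c -> a = c) -> (~~ P a' -> ~~ P c' -> a' = c') ->
  (a == c) = (a' == c').
Proof.
move=> /prP [ea ha] /prP [ec hc] h h'.
case Pa: (P a); case Pc: (P c).
- by rewrite -ha // -hc.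
- have Pa' : P a' by rewrite -ea.
  have Pc' : P c' = false by rewrite -ec.
  apply/idP/idP => /eqP e; [by rewrite e Pc in Pa | by rewrite e Pc' in Pa'].
- have Pa' : P a' = false by rewrite -ea.
  have Pc' : P c' by rewrite -ec.
  apply/idP/idP => /eqP e; [by rewrite e Pc in Pa | by rewrite e Pc' in Pa'].
- have Pa' : P a' = false by rewrite -ea.
  have Pc' : P c' = false by rewrite -ec.
  by rewrite h ?Pa ?Pc // h' ?Pa' ?Pc' // !eqxx.
Qed.

Lemma R3_at (X : seq nat) t : R3 P X -> t < size X -> P (nth 0 X t) ->
  ~~ P (nth 0 X ((t + size X - 1) %% size X)) -> ~~ P (nth 0 X ((t + 1) %% size X)) ->
  nth 0 X ((t + size X - 1) %% size X) = nth 0 X ((t + 1) %% size X).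
Proof.
move=> h ht.
have hm : nth (0,(0,0)) (triples X) t \in triples X by rewrite mem_nth // size_triples.
by have := h _ hm; rewrite nth_triples.
Qed.

Lemma bleaf_pr (G H : seq nat) w : P w -> map pr G = map pr H -> R3 P G -> R3 P H ->
  is_bleaf G w = is_bleaf H w.
Proof.
move=> Pw e hG hH.
have hs : size G = size H by rewrite -(size_map pr G) e size_map.
rewrite /is_bleaf -hs (count_pr Pw e) (index_pr Pw e).
case hc: (count_mem w H == 1); last by rewrite !andbF.
have wH : w \in H by apply: count1_mem; apply/eqP.
have wG : w \in G by apply: count1_mem; rewrite (count_pr Pw e); apply/eqP.
have ht : index w H < size G by rewrite hs index_mem.
have hG0 : 0 < size G by lia.
congr (_ && (_ && _)).
apply: eq_pr.
- by apply: nth_pr => //; rewrite ltn_mod.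
- by apply: nth_pr => //; rewrite ltn_mod.
- apply: R3_at => //; by rewrite -(index_pr Pw e) nth_index.
- rewrite hs; apply: R3_at => //; rewrite -?hs //; by rewrite nth_index.
Qed.
End PR.

Lemma foldr_minn_mem x (l : seq nat) : foldr minn x l \in x :: l.
Proof.
elim: l => [|y l IH] /=; first by rewrite mem_seq1.
rewrite /minn; case: ifP => _; first by rewrite !in_cons eqxx orbT.
move: IH; rewrite !in_cons => /orP [->|->] //; by rewrite !orbT.
Qed.

Lemma foldr_minn_le x (l : seq nat) y : y \in x :: l -> foldr minn x l <= y.
Proof.
elim: l => [|z l IH] /=; first by rewrite mem_seq1 => /eqP ->.
rewrite !in_cons => /or3P [h|/eqP ->|h].
- by rewrite geq_min IH ?orbT // in_cons h.
- by rewrite geq_min leqnn.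
- by rewrite geq_min IH ?orbT // in_cons h orbT.
Qed.

Lemma min_bleafE (s : seq nat) m : min_bleaf s = Some m ->
  [/\ m \in s, is_bleaf s m & forall w, w \in s -> is_bleaf s w -> m <= w].
Proof.
rewrite /min_bleaf; case e: [seq v <- s | is_bleaf s v] => [|x l] // [<-].
have hm := foldr_minn_mem x l; rewrite -e mem_filter in hm.
case/andP: hm => h1 h2; split=> // w ws wb.
by apply: foldr_minn_le; rewrite -e mem_filter wb.
Qed.

Lemma min_bleafI (s : seq nat) m : m \in s -> is_bleaf s m ->
  (forall w, w \in s -> is_bleaf s w -> m <= w) -> min_bleaf s = Some m.
Proof.
move=> ms mb hmin; rewrite /min_bleaf.
have : m \in [seq v <- s | is_bleaf s v] by rewrite mem_filter mb.
case e: [seq v <- s | is_bleaf s v] => [|x l] // hm; congr Some.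
have hf := foldr_minn_mem x l; rewrite -e mem_filter in hf.
case/andP: hf => h1 h2.
apply/eqP; rewrite eqn_leq foldr_minn_le ?hmin //.
Qed.

Lemma min_bleaf_none (s : seq nat) : ~~ has_bleaf s -> min_bleaf s = None.
Proof.
rewrite /has_bleaf /min_bleaf has_filter.
by case: [seq v <- s | is_bleaf s v].
Qed.

Lemma mem_remove_at t (s : seq nat) x : x \in remove_at t s -> x \in s.
Proof.
rewrite /remove_at; case: ifP => _; last by apply: mem_take.
by rewrite mem_cat => /orP [/mem_take|/mem_drop].
Qed.

Lemma seed_rec_sub k (s : seq nat) x : x \in seed_rec k s -> x \in s.
Proof.
elim: k s => [|k IH] s //=.
case: (min_bleaf s) => [v|] // /IH; exact: mem_remove_at.
Qed.

Fixpoint Phi (T0 : seq nat) (k : nat) (s : seq nat) : seq nat :=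
  match k with
  | 0 => T0
  | k'.+1 => match min_bleaf s with
             | None => T0
             | Some v => ins 0 (index v s) v (Phi T0 k' (remove_at (index v s) s))
             end
  end.

Lemma triples_center (X : seq nat) x : x \in triples X -> x.2.1 \in X.
Proof.
case/(nthP (0,(0,0))) => p; rewrite size_triples => hp <-.
by rewrite nth_triples //= mem_nth.
Qed.

Lemma R3_none (P : pred nat) (X : seq nat) : all (fun x => ~~ P x) X -> R3 P X.
Proof.
move=> /allP h x /triples_center hx Px; by move: (h _ hx); rewrite Px.
Qed.

Lemma map_pr_none (P : pred nat) (X : seq nat) : all (fun x => ~~ P x) X ->
  map (pr P) X = nseq (size X) None.
Proof.
elim: X => [|x X IH] //= /andP [hx hX]; by rewrite /pr (negbTE hx) IH.
Qed.

Section Main.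
Variable P : pred nat.
Variables G0 G0b : seq nat.
Hypothesis hG0 : all (fun x => ~~ P x) G0.
Hypothesis hG0b : all (fun x => ~~ P x) G0b.
Hypothesis hsz : size G0 = size G0b.
Hypothesis hnb : ~~ has_bleaf G0b.
Hypothesis hspec : forall w, leafish G0b w -> forall x, P x -> x < w.

Lemma main k : forall G, seed_rec k G = G0 -> all (fun x => (x \in G0) || P x) G ->
  [/\ map (pr P) G = map (pr P) (Phi G0b k G), R3 P G, R3 P (Phi G0b k G),
      (forall w, ~~ P w -> leafish (Phi G0b k G) w -> leafish G0b w) &
      [/\ all (fun x => (x \in G0b) || P x) (Phi G0b k G),
      {subset G0b <= Phi G0b k G}, seed_rec k (Phi G0b k G) = G0b
    & Phi G0 k (Phi G0b k G) = G]].
Proof.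
have base : [/\ map (pr P) G0 = map (pr P) G0b, R3 P G0, R3 P G0b,
      (forall w, ~~ P w -> leafish G0b w -> leafish G0b w) &
      all (fun x => (x \in G0b) || P x) G0b].
  split=> //; first by rewrite !map_pr_none // hsz.
  - exact: R3_none.
  - exact: R3_none.
  - by apply/allP => x ->.
have mbn := min_bleaf_none hnb.
elim: k => [|k IH] G /=.
  move=> -> _; case: base => *; split=> //; split=> //.
case mG: (min_bleaf G) => [v|]; last first.
  move=> -> _; rewrite mbn; case: base => *; split=> //; split=> //.
case: (min_bleafE mG) => vG vb vmin.
set t := index v G; set G' := remove_at t G => hseed hall.
have hins : G = ins 0 t v G' by rewrite /G' /t ins_remove.
have hN : 2 < size G by case/bleafP: vb.
have htG : t < size G by rewrite index_mem.
have hall' : all (fun x => (x \in G0) || P x) G'.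
  by apply/allP => x /mem_remove_at; apply: (allP hall).
case: (IH G' hseed hall') => e R3G' R3H' R4H' [allH' subH' seedH' PhiH'].
set H' := Phi G0b k G' in e R3H' R4H' allH' subH' seedH' PhiH' *.
have hsG : size G = (size G').+2.
  rewrite /G' /remove_at; case: ifP => h.
    rewrite size_cat size_takel ?size_drop; lia.
  rewrite size_takel; lia.
have hG'0 : 0 < size G' by lia.
have ht : t <= (size G').+1 by lia.
have hsH : size H' = size G' by rewrite -(size_map (pr P) H') -e size_map.
have hH'0 : 0 < size H' by rewrite hsH.
have ht' : t <= (size H').+1 by rewrite hsH.
have vG' : v \notin G'.
  apply/negP => hv.
  have := count_ins v v hG'0 ht; rewrite -hins eqxx.
  case/and3P: vb => _ /eqP -> _.
  have : 0 < count_mem v G' by rewrite -has_count has_pred1.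
  set c := count _ G'; rewrite [_ + true]/=; lia.
have Pv : P v.
  case/orP: (allP hall v vG) => // hv.
  by move: vG'; rewrite -hseed in hv; rewrite (seed_rec_sub hv).

set H := ins 0 t v H'.
have eH : map (pr P) G = map (pr P) H by rewrite hins !map_ins e.
have R3G : R3 P G by rewrite hins; apply: R3_ins.
have R3H : R3 P H by apply: R3_ins.
have R4H : forall w, ~~ P w -> leafish H w -> leafish G0b w.
  by move=> w Pw /(leafish_ins hH'0 ht' Pv Pw); apply: R4H'.
have mH : forall y, (y \in H) = (y == v) || (y \in H') by move=> y; apply: mem_ins.
have itH : index v H = t by rewrite -(index_pr Pv eH).
have mbH : min_bleaf H = Some v.
  apply: min_bleafI; first by rewrite mH eqxx.
    by rewrite -(bleaf_pr Pv eH R3G R3H).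
  move=> w wH wb; case Pw: (P w).
    rewrite -(bleaf_pr Pw eH R3G R3H) in wb.
    have wG : w \in G by apply: count1_mem; case/and3P: wb => _ /eqP.
    exact: vmin wG wb.
  case/bleafP: wb => _ /(R4H w (negbT Pw)) hl.
  by apply: ltnW; apply: hspec.
have rH : remove_at t H = H' by apply: remove_ins.
split=> //; split=> //.
- apply/allP => x; rewrite mH => /orP [/eqP ->|hx]; first by rewrite Pv orbT.
  exact: (allP allH').
- by move=> x /subH' hx; rewrite mH hx orbT.
- by rewrite /= mbH itH rH.
- by rewrite /= mbH itH rH PhiH'.
Qed.
End Main.

Local Open Scope fset_scope.

Lemma black_pr (P : pred nat) (G H : seq nat) x : P x -> map (pr P) G = map (pr P) H ->
  x \in black G -> x \in black H.
Proof.
move=> Px e; rewrite /black => /imfsetP [t /= ht ex]; subst x.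
have hs : size G = size H by rewrite -(size_map (pr P) G) e size_map.
move: ht; rewrite inE /= => /andP [ht hodd].
move: ht; rewrite mem_iota add0n leq0n /= => htl.
have := nth_pr e htl; case/prP => h1 h2.
rewrite h2 ?Px //. apply: (in_imfset imfset_key (fun t0 : nat => nth 0 H t0)).
  rewrite !inE /= hodd andbT.
  have : t \in iota 0 (size H) by rewrite mem_iota add0n leq0n -hs htl.
  done.
Qed.

Lemma mem_all_seqs (V : seq nat) N s :
  (s \in all_seqs V N) = (size s == N) && all (fun x => x \in V) s.
Proof.
elim: N s => [|N IH] [|x s] //=.
- by apply/negP => /allpairsP [[a b] /= [_ _]].
- rewrite eqSS; apply/allpairsP/idP.
    by case=> -[a b] /= [ha hb [-> ->]]; rewrite ha -IH hb.
  case/andP=> h1 /andP [h2 h3]; exists (x, s) => /=; split=> //.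
  by rewrite IH h1.
Qed.

Lemma uniq_all_seqs (V : seq nat) N : uniq V -> uniq (all_seqs V N).
Proof.
move=> hV; elim: N => [|N IH] //=.
apply: allpairs_uniq => //.
by move=> [a b] [c d] _ _ /= [-> ->].
Qed.

Lemma count_le (L1 L2 : seq (seq nat)) (p1 p2 : pred (seq nat)) f g :
  uniq L1 ->
  (forall G, G \in L1 -> p1 G -> [/\ f G \in L2, p2 (f G) & g (f G) = G]) ->
  size (filter p1 L1) <= size (filter p2 L2).
Proof.
move=> hu h; rewrite -(size_map f).
apply: uniq_leq_size.
  rewrite map_inj_in_uniq ?filter_uniq //.
  move=> a b; rewrite !mem_filter => /andP [pa la] /andP [pb lb] eab.
  case: (h a la pa) => _ _ <-; case: (h b lb pb) => _ _ <-; by rewrite eab.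
move=> y /mapP [G]; rewrite mem_filter => /andP [pG lG] ->.
by case: (h G lG pG) => h1 h2 _; rewrite mem_filter h1 h2.
Qed.

Lemma mem_enum_fset (A : {fset nat}) x : (x \in (A : seq nat)) = (x \in A).
Proof. by []. Qed.

Lemma dir l0 (V0 V0b V' : {fset nat}) G0 G0b N B :
  G0 \in circuits V0 (2 * l0) -> G0b \in circuits V0b (2 * l0) -> ~~ has_bleaf G0b ->
  [disjoint V' & V0] -> [disjoint V' & V0b] ->
  (l0 = 1 -> forall a b, G0b = [:: a; b] -> a != b ->
     forall x, x \in V' -> x < a /\ x < b) ->
  count_seeded (V0 `|` V') N G0 V' B <= count_seeded (V0b `|` V') N G0b V' B.
Proof.
move=> hG0 hG0b nb d0 d0b sp.
set P : pred nat := fun x => x \in V'.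
move: hG0; rewrite mem_filter => /andP [/and3P [/eqP sG0 aG0 cG0] _].
move: hG0b; rewrite mem_filter => /andP [/and3P [/eqP sG0b aG0b cG0b] _].
have nG0 : all (fun x => ~~ P x) G0.
  apply/allP => x /(allP aG0) hx; apply/negP => hP.
  by move/fdisjointP: d0 => /(_ x hP); rewrite hx.
have nG0b : all (fun x => ~~ P x) G0b.
  apply/allP => x /(allP aG0b) hx; apply/negP => hP.
  by move/fdisjointP: d0b => /(_ x hP); rewrite hx.
have hspec : forall w, leafish G0b w -> forall x, P x -> x < w.
  move=> w hl x Px.
  case: (ltnP 2 (size G0b)) => hs.
    have hb : is_bleaf G0b w by apply/bleafP.
    have wG : w \in G0b by apply: count1_mem; case: hl.
    by move: nb; rewrite /has_bleaf; move/hasPn => /(_ w wG); rewrite hb.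
  case: hl => hc _.
  case: G0b sG0b aG0b cG0b nb nG0b sp hs hc => [|a [|b [|c l]]] //= hsz _ _ _ _ sp _.
  - by lia.
  - have l01 : l0 = 1 by lia.
    move=> hc; have hab : a != b by apply/eqP => hab; move: hc; rewrite hab; case: (b == w).
    have [] := sp l01 a b erefl hab x Px.
    by move: hc; case: eqP => [->|_]; case: eqP => [->|_].
have hsz : size G0 = size G0b by rewrite sG0 sG0b.
rewrite /count_seeded /circuits.
apply: (count_le (f := Phi G0b N) (g := Phi G0 N)).
  by apply: filter_uniq; apply: uniq_all_seqs; apply: fset_uniq.
move=> G; rewrite mem_filter => /andP [/and3P [/eqP sG aG cG] _] /andP [/eqP seG /eqP bG].
have hseed : seed_rec N G = G0 by rewrite -seG /seed sG.
have hall : all (fun x => (x \in G0) || P x) G.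
  apply/allP => x /(allP aG); rewrite in_fsetU => /orP [h|h].
    by rewrite (allP cG0 x h).
  by rewrite /P h orbT.
case: (main nG0 nG0b hsz nb hspec hseed hall) => e R3G R3H R4H [allH subH seedH PhiH].
set H := Phi G0b N G in e R3G R3H R4H allH subH seedH PhiH *.
have sH : size H = N by rewrite -sG -(size_map (pr P) G) e size_map.
have aH : all (fun x => x \in V0b `|` V') H.
  apply/allP => x /(allP allH) /orP [h|h]; rewrite in_fsetU.
    by rewrite (allP aG0b x h).
  by apply/orP; right.
split=> //.
- rewrite mem_filter mem_all_seqs sH eqxx aH /is_route sH eqxx aH /=.
  rewrite andbT; apply/allP => x; rewrite mem_enum_fset in_fsetU => /orP [h|h].
    by apply: subH; apply: (allP cG0b).
  have xG : x \in G by apply: (allP cG); rewrite mem_enum_fset in_fsetU h orbT.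
  rewrite -has_pred1 has_count -(count_pr h e).
  by rewrite -has_count has_pred1.
- rewrite /seed sH seedH eqxx /=.
  rewrite -bG; apply/eqP/fsetP => x; rewrite !in_fsetI.
  case xV: (x \in V'); rewrite ?andbF ?andbT //.
  apply/idP/idP => hx.
    by apply: (black_pr (P := P) xV _ hx); rewrite e.
  exact: (black_pr (P := P) xV e hx).
Qed.

Unset Implicit Arguments.

Theorem lemma5p1 (r0 r0bar l0 : nat) (V0 V0bar V' : {fset nat})
  (G0 G0bar : seq nat) :
  #|` V0| = r0 -> #|` V0bar| = r0bar ->
  G0 \in circuits V0 (2 * l0) -> ~~ has_bleaf G0 ->
  G0bar \in circuits V0bar (2 * l0) -> ~~ has_bleaf G0bar ->
  [disjoint V' & V0] -> [disjoint V' & V0bar] ->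
  (l0 = 1 -> forall a b, G0 = [:: a; b] -> a != b ->
     forall x, x \in V' -> x < a /\ x < b) ->
  (l0 = 1 -> forall a b, G0bar = [:: a; b] -> a != b ->
     forall x, x \in V' -> x < a /\ x < b) ->
  forall B : {fset nat}, B `<=` V' ->
    count_seeded (V0 `|` V') (2 * l0 + 2 * #|` V'|) G0 V' B =
    count_seeded (V0bar `|` V') (2 * l0 + 2 * #|` V'|) G0bar V' B.
Proof.
move=> _ _ hG0 nb0 hG0b nbb d0 db s0 sb B _.
apply/eqP; rewrite eqn_leq; apply/andP; split.
- by apply: dir hG0 hG0b nbb d0 db sb.
- by apply: dir hG0b hG0 nb0 db d0 s0.
Qed.
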